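(* Let $\lambda>1$ and let $f:\mathbb Q\to\mathbb C$ have property $\mathscr S(\lambda)$. Then for every $x\in\mathfrak S\setminus\mathbb Q$, the limit $$f^\ast(x):=\lim_{y\in\mathbb Q\cap\mathfrak T(B),\ y\to x}f(y)$$ exists for every $B>0$ such that $x\in\mathfrak T(B)\setminus\mathbb Q$. Moreover, set $f^\ast(x):=f(x)$ for $x\in\mathbb Q$. Then for $m\in\mathbb N$ and $B>0$ with $m\geq B^{1/\lambda}$, uniformly in $x,x'\in\mathfrak T(B)$ satisfying $r(x),r(x')\geq m$ and $b_j(x)=b_j(x')$ for all $j\leq m$, one has $$f^\ast(x)-f^\ast(x')=o(1)\qquad(m\to\infty),$$ where the rate of decay may depend on $\lambda$ (and $f$) but not on $B$.
   Context: For $x\in\mathbb R$ write $x=[b_0(x);b_1(x),b_2(x),\dots]$ (regular continued fraction); $r(x)$ is the length of the (minimal) expansion for rational $x$ and $r(x)=\infty$ for irrational $x$. For $B>0$, $\mathfrak T(B):=\{x\in\mathbb R\colon b_j(x)\leq\max(B,j(\log j)^2)\text{ for all }1\leq j\leq r(x)\}$, and $\mathfrak S:=\bigcup_{B>0}\mathfrak T(B)$. For $B>0$, integer $m\ge1$ and $x\in\mathfrak T(B)$, $V(B,m,x):=\{x'\in\mathbb Q\cap\mathfrak T(B)\colon r(x')\geq m,\ b_j(x')=b_j(x)\ \forall j\leq m\}$. A function $f:\mathbb Q\to\mathbb C$ has property $\mathscr S(\lambda)$ if $\Delta_\lambda(m):=\sup_{x\in\mathfrak T(m^\lambda)}\sup_{x',x''\in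 V(m^\lambda,m,x)}|f(x')-f(x'')|\to0$ as $m\to\infty$. *)

(* Defs.v *)
From Stdlib Require Import Reals QArith Qcanon Qreals.
From Coquelicot Require Import Complex.
Open Scope R_scope.

Definition Qc2R (q : Qc) : R := Q2R (this q).

Definition is_rational (x : R) : Prop := exists q : Qc, Qc2R q = x.

(* Complete quotients of the regular continued fraction algorithm:
   x_0 = x, x_{n+1} = 1 / (x_n - floor x_n) provided x_n is not an integer.
   [cf_quot n x = None] iff the expansion stops before index n (i.e. r(x) < n).
   For rational x this yields the minimal expansion (last partial quotient >= 2
   when r(x) >= 1). *)
Fixpoint cf_quot (n : nat) (x : R) : option R :=
  match n with
  | O => Some x
  | S n' =>
      match cf_quot n' x with
      | None => None
      | Some y => if Req_EM_T (frac_part y) 0 then None else Some (/ frac_part y)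
      end
  end.

(* b_j(x) (Int_part = floor), defined iff j <= r(x). *)
Definition cf_digit (j : nat) (x : R) : option Z :=
  match cf_quot j x with
  | None => None
  | Some y => Some (Int_part y)
  end.

(* r(x) >= m  (r(x) = infinity for irrational x) *)
Definition r_ge (m : nat) (x : R) : Prop := cf_quot m x <> None.

Definition in_T (B : R) (x : R) : Prop :=
  forall (j : nat) (b : Z), (1 <= j)%nat -> cf_digit j x = Some b ->
    IZR b <= Rmax B (INR j * (ln (INR j)) ^ 2).

Definition in_S (x : R) : Prop := exists B, 0 < B /\ in_T B x.

(* x' \in V(B, m, x)  (x' rational is imposed where used) *)
Definition in_V (B : R) (m : nat) (x x' : R) : Prop :=
  in_T B x' /\ r_ge m x' /\ (forall j, (j <= m)%nat -> cf_digit j x' = cf_digit j x).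

(* Property S(lambda): Delta_lambda(m) -> 0, i.e. for every eps > 0, for all
   large m, sup_{x in T(m^lam)} sup_{x',x'' in V(m^lam,m,x)} |f x' - f x''| <= eps. *)
Definition prop_S (lam : R) (f : Qc -> C) : Prop :=
  forall eps, 0 < eps -> exists M : nat, forall m : nat, (M <= m)%nat -> (1 <= m)%nat ->
    forall x : R, in_T (Rpower (INR m) lam) x ->
    forall q1 q2 : Qc,
      in_V (Rpower (INR m) lam) m x (Qc2R q1) ->
      in_V (Rpower (INR m) lam) m x (Qc2R q2) ->
      Cmod (Cminus (f q1) (f q2)) <= eps.

Definition cf_limit (B : R) (f : Qc -> C) (x : R) (L : C) : Prop :=
  forall eps, 0 < eps -> exists delta, 0 < delta /\
    forall q : Qc, in_T B (Qc2R q) -> 0 < Rabs (Qc2R q - x) < delta ->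
      Cmod (Cminus (f q) L) < eps.

(* Main.v *)
Require Import Defs.
From Stdlib Require Import Reals QArith Qcanon Qreals Lra Lia ClassicalEpsilon Classical.
From Coquelicot Require Import Complex.
Open Scope R_scope.

Lemma Int_part_char (y : R) (k : Z) : IZR k <= y < IZR k + 1 -> Int_part y = k.
Proof.
  intros [H1 H2]. unfold Int_part.
  rewrite <- (tech_up y (k+1)). ring.
  rewrite plus_IZR; simpl; lra. rewrite plus_IZR; simpl; lra.
Qed.

Lemma frac_int_plus (a : Z) (s : R) : 0 <= s < 1 ->
  Int_part (IZR a + s) = a /\ frac_part (IZR a + s) = s.
Proof.
  intros Hs. assert (H : Int_part (IZR a + s) = a) by (apply Int_part_char; lra).
  split; auto. unfold frac_part. rewrite H. ring.
Qed.

Lemma frac_decomp y : y = IZR (Int_part y) + frac_part y.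
Proof. unfold frac_part. ring. Qed.

Lemma frac_range y : 0 <= frac_part y < 1.
Proof. destruct (base_fp y). lra. Qed.

Lemma near_floor (w y : R) : frac_part w <> 0 ->
  Rabs (y - w) < Rmin (frac_part w) (1 - frac_part w) ->
  Int_part y = Int_part w /\ frac_part y = frac_part w + (y - w).
Proof.
  intros Hf Hy. pose proof (frac_range w).
  pose proof (frac_decomp w).
  assert (Hm1 := Rmin_l (frac_part w) (1 - frac_part w)).
  assert (Hm2 := Rmin_r (frac_part w) (1 - frac_part w)).
  apply Rabs_def2 in Hy.
  assert (E : Int_part y = Int_part w) by (apply Int_part_char; lra).
  split; auto. unfold frac_part at 1. rewrite E. unfold frac_part. ring.
Qed.

Fixpoint quot (n : nat) (y : R) : R :=
  match n with O => y | S n' => quot n' (/ frac_part y) end.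

Lemma quot_S n y : quot (S n) y = / frac_part (quot n y).
Proof. revert y; induction n; intros y. reflexivity.
  change (quot (S (S n)) y) with (quot (S n) (/ frac_part y)). rewrite IHn. reflexivity. Qed.

Lemma cf_quot_Some n y : (forall i, (i < n)%nat -> frac_part (quot i y) <> 0) ->
  cf_quot n y = Some (quot n y).
Proof.
  induction n; intros H; [reflexivity|]. cbn [cf_quot].
  rewrite IHn by (intros; apply H; lia).
  destruct (Req_EM_T (frac_part (quot n y)) 0).
  - exfalso; apply (H n); auto.
  - rewrite quot_S; auto.
Qed.

Lemma cf_quot_inv n y w : cf_quot n y = Some w ->
  w = quot n y /\ (forall i, (i < n)%nat -> frac_part (quot i y) <> 0).
Proof.
  revert w; induction n; intros w H; cbn [cf_quot] in H.
  - inversion H; split; auto; intros; lia.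
  - destruct (cf_quot n y) as [v|] eqn:E; [|discriminate].
    destruct (IHn v eq_refl) as [-> H2].
    destruct (Req_EM_T (frac_part (quot n y)) 0); [discriminate|].
    inversion H; subst. split. rewrite quot_S; auto.
    intros i Hi. destruct (Nat.eq_dec i n); [subst; auto| apply H2; lia].
Qed.

Lemma cf_quot_None_mono n k y : cf_quot n y = None -> (n <= k)%nat -> cf_quot k y = None.
Proof.
  intros H Hk. induction Hk; auto. simpl. rewrite IHHk. reflexivity.
Qed.

Definition ratQ (x : R) : Prop := exists q : Q, Q2R q = x.

Lemma Q2R_Z z : Q2R (inject_Z z) = IZR z.
Proof. unfold Q2R, inject_Z; simpl. field. Qed.

Lemma ratQ_is_rational x : ratQ x <-> is_rational x.
Proof.
  split.
  - intros [q Hq]. exists (Q2Qc q). unfold Qc2R. simpl. rewrite <- Hq.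
    apply Qeq_eqR. apply Qred_correct.
  - intros [q Hq]. exists (this q). exact Hq.
Qed.

Lemma Qc2R_inj q1 q2 : Qc2R q1 = Qc2R q2 -> q1 = q2.
Proof. intros H. apply Qc_is_canon. apply eqR_Qeq. exact H. Qed.

Lemma ratQ_quot k x : ratQ (quot k x) -> ratQ x.
Proof.
  revert x; induction k; intros x H; simpl in H; auto.
  apply IHk in H. destruct (Req_EM_T (frac_part x) 0) as [E|E].
  - exists (inject_Z (Int_part x)). rewrite Q2R_Z. rewrite (frac_decomp x) at 2. rewrite E. ring.
  - destruct H as [q Hq].
    assert (Hq0 : ~ q == 0). { intros Hc. apply Qeq_eqR in Hc. rewrite Hq in Hc.
      unfold Q2R in Hc; simpl in Hc. assert (/ frac_part x <> 0) by (apply Rinv_neq_0_compat; auto). lra. }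
    exists (inject_Z (Int_part x) + / q)%Q. rewrite Q2R_plus, Q2R_inv, Q2R_Z, Hq by auto.
    rewrite Rinv_inv. symmetry; apply frac_decomp.
Qed.

Definition irr_like (x : R) : Prop := forall k, frac_part (quot k x) <> 0.

Lemma irrational_irr_like x : ~ is_rational x -> irr_like x.
Proof.
  intros H k Hk. apply H. apply ratQ_is_rational. apply (ratQ_quot k).
  exists (inject_Z (Int_part (quot k x))). rewrite Q2R_Z.
  rewrite (frac_decomp (quot k x)) at 2. rewrite Hk. ring.
Qed.

Lemma irr_like_cf x k : irr_like x -> cf_quot k x = Some (quot k x).
Proof. intros H. apply cf_quot_Some. intros; apply H. Qed.

Lemma irr_like_digit x k : irr_like x -> cf_digit k x = Some (Int_part (quot k x)).
Proof. intros H. unfold cf_digit. rewrite irr_like_cf; auto. Qed.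

Lemma frac_pos w : frac_part w <> 0 -> 0 < frac_part w < 1.
Proof. intros H. pose proof (frac_range w). destruct H0 as [[H1|H1] H2]; [lra|]. congruence. Qed.

Lemma inv_cont (u d e : R) : 0 < u -> 0 < e -> Rabs d < u / 2 -> Rabs d < e * u * u / 2 ->
  Rabs (/ (u + d) - / u) < e.
Proof.
  intros Hu He H1 H2. apply Rabs_def2 in H1. apply Rabs_def2 in H2.
  assert (Hv : 0 < u + d) by lra.
  assert (E : / (u + d) - / u = - d * / (u * (u + d))) by (field; lra).
  rewrite E. set (w := / (u * (u + d))).
  assert (Hw : w * (u * (u + d)) = 1) by (unfold w; field; lra).
  assert (Hw0 : 0 < w) by (unfold w; apply Rinv_0_lt_compat; nra).
  assert (Hk : e * u * u / 2 < e * (u * (u + d))) by nra.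
  apply Rabs_def1; nra.
Qed.

Lemma cont_quot n : forall x, irr_like x -> forall eps, 0 < eps -> exists delta, 0 < delta /\
  forall y, Rabs (y - x) < delta -> Rabs (quot n y - quot n x) < eps.
Proof.
  induction n; intros x Hx eps He.
  - exists eps; split; auto.
  - assert (Hx' : irr_like (/ frac_part x)) by (intros k; apply (Hx (S k))).
    destruct (IHn _ Hx' eps He) as [d' [Hd' Hy']].
    set (u := frac_part x).
    assert (Hu : 0 < u) by (pose proof (frac_pos x (Hx O)); unfold u; lra).
    assert (Hu1 : u < 1) by (pose proof (frac_range x); unfold u; lra).
    exists (Rmin (Rmin u (1 - u)) (Rmin (u/2) (d' * u * u / 2))). split.
    { assert (0 < d' * u * u) by (apply Rmult_lt_0_compat; [apply Rmult_lt_0_compat|]; lra). repeat apply Rmin_pos; lra. }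
    intros y Hy.
    assert (Hm1 := Rmin_l (Rmin u (1 - u)) (Rmin (u/2) (d' * u * u / 2))).
    assert (Hm2 := Rmin_r (Rmin u (1 - u)) (Rmin (u/2) (d' * u * u / 2))).
    assert (Hm3 := Rmin_l (u/2) (d' * u * u / 2)).
    assert (Hm4 := Rmin_r (u/2) (d' * u * u / 2)).
    destruct (near_floor x y) as [_ Hf]. { apply (Hx O). } { fold u. lra. }
    change (quot (S n) y) with (quot n (/ frac_part y)).
    change (quot (S n) x) with (quot n (/ frac_part x)).
    apply Hy'. rewrite Hf. fold u. apply inv_cont; lra.
Qed.

Lemma near_digits m : forall x, irr_like x -> exists delta, 0 < delta /\
  forall y, Rabs (y - x) < delta -> forall j, (j <= m)%nat ->
    frac_part (quot j y) <> 0 /\ Int_part (quot j y) = Int_part (quot j x).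
Proof.
  intros x Hx. induction m.
  - pose (w := x).
    assert (Hp : 0 < Rmin (frac_part w) (1 - frac_part w)).
    { pose proof (frac_pos w (Hx O)). apply Rmin_pos; lra. }
    exists (Rmin (frac_part w) (1 - frac_part w)). split; auto.
    intros y Hy j Hj. replace j with O by lia. simpl.
    destruct (near_floor w y) as [H1 H2]; [apply (Hx O)|auto|].
    split; auto. rewrite H2. apply Rabs_def2 in Hy.
    assert (Hm := Rmin_l (frac_part w) (1 - frac_part w)). apply Rgt_not_eq. unfold w in *. lra.
  - destruct IHm as [d1 [Hd1 H1]].
    pose (w := quot (S m) x).
    assert (Hp : 0 < Rmin (frac_part w) (1 - frac_part w)).
    { pose proof (frac_pos w (Hx (S m))). apply Rmin_pos; lra. }
    destruct (cont_quot (S m) x Hx _ Hp) as [d2 [Hd2 H2]].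
    exists (Rmin d1 d2). split; [apply Rmin_pos; auto|].
    intros y Hy j Hj.
    assert (Hm1 := Rmin_l d1 d2). assert (Hm2 := Rmin_r d1 d2).
    destruct (Nat.eq_dec j (S m)) as [->|Hne]; [|apply H1; [lra|lia]].
    specialize (H2 y ltac:(lra)).
    destruct (near_floor w (quot (S m) y)) as [E1 E2]; [apply (Hx (S m))|auto|].
    split; auto. rewrite E2. apply Rabs_def2 in H2.
    assert (Hm := Rmin_l (frac_part w) (1 - frac_part w)). apply Rgt_not_eq. unfold w in *. lra.
Qed.

Lemma near_cf m x : irr_like x -> exists delta, 0 < delta /\
  forall y, Rabs (y - x) < delta -> r_ge m y /\ forall j, (j <= m)%nat -> cf_digit j y = cf_digit j x.
Proof.
  intros Hx. destruct (near_digits m x Hx) as [d [Hd H]]. exists d; split; auto.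
  intros y Hy. split.
  - unfold r_ge. rewrite cf_quot_Some. discriminate. intros i Hi. apply (proj1 (H y Hy i ltac:(lia))).
  - intros j Hj. rewrite (irr_like_digit x j Hx). unfold cf_digit. rewrite cf_quot_Some.
    f_equal. apply (proj2 (H y Hy j Hj)). intros i Hi. apply (proj1 (H y Hy i ltac:(lia))).
Qed.

Lemma Int_part_ge1 y : 1 < y -> (1 <= Int_part y)%Z.
Proof.
  intros H. destruct (base_Int_part y) as [_ H2].
  assert (0 < IZR (Int_part y)) by lra. apply lt_IZR in H0. lia.
Qed.

Lemma quot_gt1 x k : irr_like x -> (1 <= k)%nat -> 1 < quot k x.
Proof.
  intros Hx Hk. destruct k; [lia|]. rewrite quot_S.
  pose proof (frac_pos _ (Hx k)). rewrite <- Rinv_1. apply Rinv_lt_contravar; lra.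
Qed.

Fixpoint build (x : R) (k d : nat) (z : R) : R :=
  match d with O => z | S d' => IZR (Int_part (quot k x)) + / build x (S k) d' z end.

Lemma build_gt1 x z : irr_like x -> 1 < z -> forall d k, (1 <= k)%nat -> 1 < build x k d z.
Proof.
  intros Hx Hz d. induction d; intros k Hk; simpl; auto.
  pose proof (Int_part_ge1 _ (quot_gt1 x k Hx Hk)). apply IZR_le in H.
  specialize (IHd (S k) ltac:(lia)).
  assert (0 < / build x (S k) d z) by (apply Rinv_0_lt_compat; lra). lra.
Qed.

Lemma inv_small t : 1 < t -> 0 <= / t < 1.
Proof. intros H. split. apply Rlt_le, Rinv_0_lt_compat; lra.
  rewrite <- Rinv_1. apply Rinv_lt_contravar; lra. Qed.

Lemma build_quot x z : irr_like x -> 1 < z -> forall d k i, (i <= d)%nat ->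
  quot i (build x k d z) = build x (k + i) (d - i) z.
Proof.
  intros Hx Hz d. induction d; intros k i Hi.
  - replace i with O by lia. replace (k+0)%nat with k by lia. reflexivity.
  - destruct i. { replace (k+0)%nat with k by lia. reflexivity. }
    change (quot (S i) (build x k (S d) z)) with (quot i (/ frac_part (build x k (S d) z))).
    simpl build at 1.
    pose proof (build_gt1 x z Hx Hz d (S k) ltac:(lia)).
    rewrite (proj2 (frac_int_plus _ _ (inv_small _ H))). rewrite Rinv_inv.
    rewrite IHd by lia. replace (S k + i)%nat with (k + S i)%nat by lia. reflexivity.
Qed.

Lemma build_rat x z : irr_like x -> 1 < z -> ratQ z -> forall d k, ratQ (build x k d z).
Proof.
  intros Hx Hz Hr d. induction d; intros k; simpl; auto.
  destruct (IHd (S k)) as [q Hq].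
  pose proof (build_gt1 x z Hx Hz d (S k) ltac:(lia)).
  assert (Hq0 : ~ (q == 0)%Q). { intros Hc. apply Qeq_eqR in Hc. rewrite Hq in Hc.
      unfold Q2R in Hc; simpl in Hc. lra. }
  exists (inject_Z (Int_part (quot k x)) + / q)%Q.
  rewrite Q2R_plus, Q2R_inv, Q2R_Z, Hq by auto. reflexivity.
Qed.

Definition Yz (x : R) (n : nat) : R := IZR (Int_part (quot (n+2) x)) + / 2.
Definition Y (x : R) (n : nat) : R := build x 0 (n+2) (Yz x n).

Lemma Yz_gt1 x n : irr_like x -> 1 < Yz x n.
Proof.
  intros Hx. unfold Yz. pose proof (Int_part_ge1 _ (quot_gt1 x (n+2) Hx ltac:(lia))).
  apply IZR_le in H. lra.
Qed.

Lemma Yz_props x n : irr_like x -> Int_part (Yz x n) = Int_part (quot (n+2) x) /\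
  frac_part (Yz x n) = / 2.
Proof. intros. unfold Yz. apply frac_int_plus. lra. Qed.

Lemma Y_quot x n i : irr_like x -> (i <= n + 2)%nat -> quot i (Y x n) = build x i (n + 2 - i) (Yz x n).
Proof. intros Hx Hi. unfold Y. rewrite build_quot; auto. apply Yz_gt1; auto. Qed.

Lemma Y_frac x n i : irr_like x -> (i <= n + 2)%nat -> frac_part (quot i (Y x n)) <> 0 /\
   Int_part (quot i (Y x n)) = Int_part (quot i x).
Proof.
  intros Hx Hi. rewrite Y_quot by auto.
  destruct (Nat.eq_dec i (n+2)) as [->|Hne].
  - rewrite Nat.sub_diag. simpl. destruct (Yz_props x n Hx) as [-> ->]. split; auto. lra.
  - replace (n + 2 - i)%nat with (S (n + 1 - i)) by lia. simpl build.
    pose proof (build_gt1 x _ Hx (Yz_gt1 x n Hx) (n + 1 - i) (S i) ltac:(lia)).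
    destruct (frac_int_plus (Int_part (quot i x)) _ (inv_small _ H)) as [-> ->].
    split; auto. apply Rinv_neq_0_compat. lra.
Qed.

Lemma Y_quot_last x n : irr_like x -> quot (n + 3) (Y x n) = 2.
Proof.
  intros Hx. replace (n+3)%nat with (S (n+2)) by lia. rewrite quot_S.
  rewrite Y_quot by (auto; lia). rewrite Nat.sub_diag. simpl.
  rewrite (proj2 (Yz_props x n Hx)). apply Rinv_inv.
Qed.

Lemma frac_2 : frac_part 2 = 0.
Proof. replace 2 with (IZR 2 + 0) by (simpl; ring). rewrite (proj2 (frac_int_plus 2 0 ltac:(lra))). reflexivity. Qed.

Lemma Int_2 : Int_part 2 = 2%Z.
Proof. replace 2 with (IZR 2 + 0) by (simpl; ring). apply (proj1 (frac_int_plus 2 0 ltac:(lra))). Qed.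

Lemma Y_cf_Some x n i : irr_like x -> (i <= n + 3)%nat -> cf_quot i (Y x n) = Some (quot i (Y x n)).
Proof. intros Hx Hi. apply cf_quot_Some. intros j Hj. apply Y_frac; auto; lia. Qed.

Lemma Y_cf_None x n i : irr_like x -> (n + 4 <= i)%nat -> cf_quot i (Y x n) = None.
Proof.
  intros Hx Hi. apply (cf_quot_None_mono (n+4)); auto.
  replace (n+4)%nat with (S (n+3)) by lia. cbn [cf_quot].
  rewrite Y_cf_Some by (auto; lia). rewrite Y_quot_last by auto.
  destruct (Req_EM_T (frac_part 2) 0) as [_|H]; auto. exfalso; apply H, frac_2.
Qed.

Lemma Y_digit x n j : irr_like x -> (j <= n + 2)%nat -> cf_digit j (Y x n) = cf_digit j x.
Proof.
  intros Hx Hj. rewrite (irr_like_digit x j Hx). unfold cf_digit.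
  rewrite Y_cf_Some by (auto; lia). f_equal. apply Y_frac; auto.
Qed.

Lemma Y_r_ge x n m : irr_like x -> (m <= n + 3)%nat -> r_ge m (Y x n).
Proof. intros Hx Hm. unfold r_ge. rewrite Y_cf_Some by auto. discriminate. Qed.

Lemma ln_ge1 (N : nat) : (3 <= N)%nat -> 1 <= ln (INR N).
Proof.
  intros H. apply le_INR in H. simpl in H.
  rewrite <- ln_exp with 1. pose proof exp_le_3. pose proof (exp_pos 1).
  destruct (Rle_lt_or_eq_dec (exp 1) (INR N)) as [h|h]; [lra| |].
  - left. apply ln_increasing; lra.
  - right. rewrite h. reflexivity.
Qed.

Lemma Y_in_T x n B : irr_like x -> in_T B x -> in_T B (Y x n).
Proof.
  intros Hx HT j b Hj Hd.
  destruct (Compare_dec.le_lt_dec j (n+2)) as [Hle|Hlt].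
  - rewrite Y_digit in Hd by auto. apply (HT j b Hj Hd).
  - destruct (Nat.eq_dec j (n+3)) as [->|Hne].
    + unfold cf_digit in Hd. rewrite Y_cf_Some, Y_quot_last, Int_2 in Hd by auto.
      inversion Hd; subst. eapply Rle_trans; [|apply Rmax_r].
      pose proof (ln_ge1 (n+3) ltac:(lia)). pose proof (le_INR 3 (n+3) ltac:(lia)). simpl in H0.
      simpl pow. nra.
    + unfold cf_digit in Hd. rewrite Y_cf_None in Hd by (auto; lia). discriminate.
Qed.

Lemma Y_rational x n : irr_like x -> is_rational (Y x n).
Proof.
  intros Hx. apply ratQ_is_rational. unfold Y. apply build_rat; auto. apply Yz_gt1; auto.
  unfold Yz. exists (inject_Z (Int_part (quot (n + 2) x)) + (1 # 2))%Q.
  rewrite Q2R_plus, Q2R_Z. unfold Q2R; simpl. field.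
Qed.

Lemma Cmod_tri3 a b c : Cmod (Cminus a c) <= Cmod (Cminus a b) + Cmod (Cminus b c).
Proof.
  replace (Cminus a c) with (Cplus (Cminus a b) (Cminus b c)) by ring. apply Cmod_triangle.
Qed.

Lemma Cmod_sym a b : Cmod (Cminus a b) = Cmod (Cminus b a).
Proof. replace (Cminus a b) with (Copp (Cminus b a)) by ring. apply Cmod_opp. Qed.

Lemma Cmod_self a : Cmod (Cminus a a) = 0.
Proof. replace (Cminus a a) with (RtoC 0) by ring. apply Cmod_0. Qed.

Definition convC (u : nat -> C) (L : C) : Prop :=
  forall eps, 0 < eps -> exists N, forall n, (N <= n)%nat -> Cmod (Cminus (u n) L) < eps.

Lemma sqrt2_lt2 : sqrt 2 < 2.
Proof. pose proof (sqrt_sqrt 2 ltac:(lra)). pose proof (sqrt_pos 2). nra. Qed.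

Lemma C_complete (u : nat -> C) :
  (forall eps, 0 < eps -> exists N, forall n k, (N <= n)%nat -> (N <= k)%nat ->
     Cmod (Cminus (u n) (u k)) <= eps) -> exists L, convC u L.
Proof.
  intros H.
  assert (Hc : forall g : C -> R, (forall z, Rabs (g z) <= Cmod z) ->
     (forall a b, g (Cminus a b) = g a - g b) -> Cauchy_crit (fun n => g (u n))).
  { intros g Hg Hgm eps He. destruct (H (eps/2) ltac:(lra)) as [N HN]. exists N.
    intros n k Hn Hk. unfold Rdist. rewrite <- Hgm. eapply Rle_lt_trans; [apply Hg|].
    eapply Rle_lt_trans; [apply HN; lia|lra]. }
  destruct (R_complete _ (Hc fst ltac:(intros z; eapply Rle_trans; [apply Rmax_l|apply Rmax_Cmod])
     ltac:(intros; reflexivity))) as [lr Hr].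
  destruct (R_complete _ (Hc snd ltac:(intros z; eapply Rle_trans; [apply Rmax_r|apply Rmax_Cmod])
     ltac:(intros; reflexivity))) as [li Hi].
  exists (lr, li). intros eps He.
  destruct (Hr (eps/2) ltac:(lra)) as [N1 H1]. destruct (Hi (eps/2) ltac:(lra)) as [N2 H2].
  exists (max N1 N2). intros n Hn.
  eapply Rle_lt_trans; [apply Cmod_2Rmax|].
  specialize (H1 n ltac:(lia)). specialize (H2 n ltac:(lia)). unfold Rdist in *.
  assert (Rmax (Rabs (fst (Cminus (u n) (lr, li)))) (Rabs (snd (Cminus (u n) (lr, li)))) < eps / 2).
  { apply Rmax_lub_lt; simpl; unfold Rminus in *; auto. }
  pose proof sqrt2_lt2. pose proof (sqrt_pos 2).
  pose proof (Rle_trans _ _ _ (Rabs_pos _) (Rmax_l (Rabs (fst (Cminus (u n) (lr, li)))) (Rabs (snd (Cminus (u n) (lr, li)))))).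
  nra.
Qed.

Lemma in_T_mono B B' x : B <= B' -> in_T B x -> in_T B' x.
Proof.
  intros HB H j b Hj Hd. eapply Rle_trans; [apply (H j b Hj Hd)|].
  unfold Rmax. destruct (Rle_dec B _); destruct (Rle_dec B' _); lra.
Qed.

Lemma exists_m (lam B : R) (M : nat) : 1 <= lam -> exists m : nat,
  (M <= m)%nat /\ (1 <= m)%nat /\ B <= Rpower (INR m) lam.
Proof.
  intros Hl. destruct (INR_unbounded B) as [n0 Hn0].
  exists (max (max M 1) n0). split; [lia|split;[lia|]].
  set (m := max (max M 1) n0).
  assert (H1 : 1 <= INR m) by (apply (le_INR 1); unfold m; lia).
  assert (H2 : INR n0 <= INR m) by (apply le_INR; unfold m; lia).
  eapply Rle_trans with (INR m); [lra|].
  rewrite <- (Rpower_1 (INR m)) at 1 by lra. apply Rle_Rpower; lra.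
Qed.

Lemma B_le (lam B : R) (m : nat) : 1 < lam -> 0 < B -> Rpower B (/ lam) <= INR m ->
  B <= Rpower (INR m) lam.
Proof.
  intros Hl HB H. rewrite <- (Rpower_1 B) at 1 by auto.
  replace 1 with (/ lam * lam) by (field; lra). rewrite <- Rpower_mult.
  apply Rle_Rpower_l; [lra|]. split; auto. unfold Rpower. apply exp_pos.
Qed.

Definition Yq (x : R) (n : nat) : Qc := epsilon (inhabits (Q2Qc 0)) (fun q => Qc2R q = Y x n).

Lemma Yq_spec x n : irr_like x -> Qc2R (Yq x n) = Y x n.
Proof.
  intros Hx. unfold Yq. apply epsilon_spec.
  destruct (Y_rational x n Hx) as [q Hq]. exists q; auto.
Qed.

Definition Pst (f : Qc -> C) (x : R) (L : C) : Prop :=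
  (exists q, Qc2R q = x /\ L = f q) \/ (~ is_rational x /\ convC (fun n => f (Yq x n)) L).

Definition fst_def (f : Qc -> C) (x : R) : C := epsilon (inhabits (RtoC 0)) (Pst f x).

Lemma fst_rat f q : fst_def f (Qc2R q) = f q.
Proof.
  unfold fst_def. destruct (epsilon_spec (inhabits (RtoC 0)) (Pst f (Qc2R q))) as [[q' [E1 E2]]|[Hn _]].
  - exists (f q). left. exists q; auto.
  - rewrite E2. f_equal. apply Qc2R_inj; auto.
  - exfalso. apply Hn. exists q; auto.
Qed.

Section Main.
Variables (lam : R) (f : Qc -> C).
Hypothesis Hlam : 1 < lam.
Hypothesis HS : prop_S lam f.

Lemma key eps : 0 < eps -> exists M : nat, forall (m : nat) (B c : R) (q1 q2 : Qc),
  (M <= m)%nat -> (1 <= m)%nat -> B <= Rpower (INR m) lam -> in_T B c ->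
  in_T B (Qc2R q1) -> r_ge m (Qc2R q1) -> (forall j, (j <= m)%nat -> cf_digit j (Qc2R q1) = cf_digit j c) ->
  in_T B (Qc2R q2) -> r_ge m (Qc2R q2) -> (forall j, (j <= m)%nat -> cf_digit j (Qc2R q2) = cf_digit j c) ->
  Cmod (Cminus (f q1) (f q2)) <= eps.
Proof.
  intros He. destruct (HS eps He) as [M HM]. exists M.
  intros m B c q1 q2 Hm Hm1 HB Hc T1 R1 D1 T2 R2 D2.
  apply (HM m Hm Hm1 c (in_T_mono _ _ _ HB Hc)); repeat split; auto; eapply in_T_mono; eauto.
Qed.

Lemma irr_cauchy x B : irr_like x -> in_T B x -> exists L, convC (fun n => f (Yq x n)) L.
Proof.
  intros Hx HT. apply C_complete. intros eps He.
  destruct (key eps He) as [M HM].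
  destruct (exists_m lam B M ltac:(lra)) as [m [Hm1 [Hm2 Hm3]]].
  exists m. intros n k Hn Hk.
  apply (HM m B x); auto; rewrite ?Yq_spec by auto;
    try apply Y_in_T; try apply Y_r_ge; auto; try lia; intros; apply Y_digit; auto; lia.
Qed.

Lemma fst_irr x B : ~ is_rational x -> in_T B x -> convC (fun n => f (Yq x n)) (fst_def f x).
Proof.
  intros Hn HT. pose proof (irrational_irr_like x Hn) as Hx.
  unfold fst_def. destruct (epsilon_spec (inhabits (RtoC 0)) (Pst f x)) as [[q' [E1 E2]]|[_ Hc]]; auto.
  - destruct (irr_cauchy x B Hx HT) as [L HL]. exists L. right. auto.
  - exfalso; apply Hn. exists q'; auto.
Qed.

Lemma approx x B m : 0 < B -> in_T B x -> r_ge m x -> forall d, 0 < d -> exists q : Qc,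
  Cmod (Cminus (fst_def f x) (f q)) < d /\ in_T B (Qc2R q) /\ r_ge m (Qc2R q) /\
  (forall j, (j <= m)%nat -> cf_digit j (Qc2R q) = cf_digit j x).
Proof.
  intros HB HT Hr d Hd. destruct (classic (is_rational x)) as [[q Hq]|Hn].
  - subst x. exists q. rewrite fst_rat, Cmod_self. auto.
  - pose proof (irrational_irr_like x Hn) as Hx.
    destruct (fst_irr x B Hn HT d Hd) as [N HN].
    exists (Yq x (max N m)). rewrite Cmod_sym. rewrite Yq_spec by auto.
    split; [apply HN; lia|]. split; [apply Y_in_T; auto|]. split; [apply Y_r_ge; auto; lia|].
    intros; apply Y_digit; auto; lia.
Qed.

End Main.

Theorem proposition2p2 (lam : R) (f : Qc -> C) :
  1 < lam -> prop_S lam f ->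
  exists fstar : R -> C,
    (forall q : Qc, fstar (Qc2R q) = f q) /\
    (forall (x B : R), 0 < B -> in_T B x -> ~ is_rational x -> cf_limit B f x (fstar x)) /\
    (forall eps, 0 < eps -> exists M : nat, forall (m : nat) (B x x' : R),
       (M <= m)%nat -> (1 <= m)%nat -> 0 < B -> Rpower B (/ lam) <= INR m ->
       in_T B x -> in_T B x' -> r_ge m x -> r_ge m x' ->
       (forall j, (j <= m)%nat -> cf_digit j x = cf_digit j x') ->
       Cmod (Cminus (fstar x) (fstar x')) <= eps).
Proof.
  intros Hlam HS. exists (fst_def f). split; [intros; apply fst_rat|]. split.
  - intros x B HB HT Hn eps He.
    pose proof (irrational_irr_like x Hn) as Hx.
    destruct (key lam f HS (eps/2) ltac:(lra)) as [M HM].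
    destruct (exists_m lam B M ltac:(lra)) as [m [Hm1 [Hm2 Hm3]]].
    destruct (near_cf m x Hx) as [delta [Hd Hnear]].
    destruct (fst_irr lam f Hlam HS x B Hn HT (eps/2) ltac:(lra)) as [N HN].
    exists delta. split; auto. intros q Tq [_ Hq].
    destruct (Hnear _ Hq) as [Rq Dq].
    set (n := max N m).
    assert (H1 : Cmod (Cminus (f q) (f (Yq x n))) <= eps / 2).
    { apply (HM m B x); auto; rewrite ?Yq_spec by auto;
      try apply Y_in_T; try apply Y_r_ge; auto; try (unfold n; lia).
      intros; apply Y_digit; auto; unfold n; lia. }
    assert (H2 : Cmod (Cminus (f (Yq x n)) (fst_def f x)) < eps / 2) by (apply HN; unfold n; lia).
    pose proof (Cmod_tri3 (f q) (f (Yq x n)) (fst_def f x)). lra.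
  - intros eps He. destruct (key lam f HS eps He) as [M HM]. exists M.
    intros m B x x' Hm Hm1 HB Hp Tx Tx' Rx Rx' D.
    pose proof (B_le lam B m Hlam HB Hp) as HBm.
    apply Rnot_lt_le; intros Hgt.
    set (d := (Cmod (Cminus (fst_def f x) (fst_def f x')) - eps) / 3).
    assert (Hd : 0 < d) by (unfold d; lra).
    destruct (approx lam f Hlam HS x B m HB Tx Rx d Hd) as [q [A1 [A2 [A3 A4]]]].
    destruct (approx lam f Hlam HS x' B m HB Tx' Rx' d Hd) as [q' [B1 [B2 [B3 B4]]]].
    assert (Hqq : Cmod (Cminus (f q) (f q')) <= eps).
    { apply (HM m B x); auto. intros j Hj. rewrite B4 by auto. symmetry; auto. }
    pose proof (Cmod_tri3 (fst_def f x) (f q) (fst_def f x')).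
    pose proof (Cmod_tri3 (f q) (f q') (fst_def f x')).
    rewrite (Cmod_sym (f q') (fst_def f x')) in H0.
    unfold d in *. lra.
Qed.
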